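(* Let $A_1,A_2\in\mathbf{C}^{n\times n}$ and define $\Phi_1(t),\Phi_2(t)\in\mathbf{C}^{n\times n}$ by $$\begin{bmatrix}\Phi_1(t)\\ \Phi_2(t)\end{bmatrix}=\mathrm{e}^{t\{A_1,A_2\}_\diamond}\begin{bmatrix}I_n\\ 0_{n\times n}\end{bmatrix}\ (t\in\mathbf{R}),\qquad \begin{bmatrix}\Phi_1(t)\\ \Phi_2(t)\end{bmatrix}=\left(\{A_1,A_2\}_\diamond\right)^t\begin{bmatrix}I_n\\ 0_{n\times n}\end{bmatrix}\ (t\in\mathbf{Z}),$$ where in the case $t\in\mathbf{Z}$, $t<0$, the bimatrix $\{A_1,A_2\}$ is assumed nonsingular. Then $\{\Phi_1(t),\Phi_2(t)\}=\mathrm{e}^{t\{A_1,A_2\}}$ for $t\in\mathbf{R}$, and $\{\Phi_1(t),\Phi_2(t)\}=\{A_1,A_2\}^t$ for $t\in\mathbf{Z}$.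
   Context: $P^{\#}$ denotes entrywise conjugate. For $A_1,A_2\in\mathbf{C}^{n\times n}$ the bimatrix $\{A_1,A_2\}$ is the real-linear map $\mathbf{C}^n\to\mathbf{C}^n$, $x\mapsto A_1x+A_2^{\#}x^{\#}$; sums are pointwise, products are compositions, $\mathcal{I}_n=\{I_n,0\}$ is the identity, and equality means equality as maps. Powers: $\{A_1,A_2\}^0=\mathcal{I}_n$, $\{A_1,A_2\}^i=\{A_1,A_2\}\{A_1,A_2\}^{i-1}$ for $i\geq1$; if $\{A_1,A_2\}$ is nonsingular (has a two-sided inverse bimatrix), $\{A_1,A_2\}^{-i}$ is the $i$-th power of the inverse. Exponent: $\mathrm{e}^{t\{A_1,A_2\}}=\sum_{i=0}^\infty \frac{t^i}{i!}\{A_1,A_2\}^i$ (applied pointwise to $x$, convergent), $t\in\mathbf{R}$. Complex lifting: $\{A_1,A_2\}_\diamond=\begin{bmatrix}A_1 & A_2^{\#}\\ A_2 & A_1^{\#}\end{bmatrix}$. *)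

(* Defs.v *)
From mathcomp Require Import all_boot all_order all_algebra.
From mathcomp Require Import all_classical all_reals.
From mathcomp Require Export complex.
Import GRing.Theory Num.Theory.
Set Implicit Arguments.
Unset Strict Implicit.
Unset Printing Implicit Defensive.
Local Open Scope ring_scope.
Local Open Scope complex_scope.

Section Bimatrix.
Variable R : realType.
Local Notation C := R[i].

Definition mxconj (p q : nat) (P : 'M[C]_(p, q)) : 'M[C]_(p, q) :=
  map_mx (fun z : C => z^*) P.

(* the bimatrix {A1,A2} as the real-linear map x |-> A1 x + A2^# x^# *)
Definition bmx (n : nat) (A1 A2 : 'M[C]_n) (x : 'cV[C]_n) : 'cV[C]_n :=
  A1 *m x + mxconj A2 *m mxconj x.

Definition bmx_pow (n : nat) (A1 A2 : 'M[C]_n) (k : nat) : 'cV[C]_n -> 'cV[C]_n :=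
  iter k (bmx A1 A2).

Definition bmx_inverse (n : nat) (A1 A2 B1 B2 : 'M[C]_n) : Prop :=
  (forall x, bmx A1 A2 (bmx B1 B2 x) = x) /\ (forall x, bmx B1 B2 (bmx A1 A2 x) = x).

Definition cmx_cvg (p q : nat) (u : nat -> 'M[C]_(p, q)) (L : 'M[C]_(p, q)) : Prop :=
  forall e : R, 0 < e -> exists N : nat, forall k : nat, (N <= k)%N ->
    forall i j, `|u k i j - L i j| < e%:C.

Definition cmx_lim (p q : nat) (u : nat -> 'M[C]_(p, q)) : 'M[C]_(p, q) :=
  xget 0 (cmx_cvg u).

Definition mexp (m : nat) (t : R) (M : 'M[C]_m) : 'M[C]_m :=
  cmx_lim (fun N => \sum_(i < N) ((t ^+ i / (i`!)%:R)%:C *: M ^+ i)).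

Definition bmx_exp (n : nat) (t : R) (A1 A2 : 'M[C]_n) (x : 'cV[C]_n) : 'cV[C]_n :=
  cmx_lim (fun N => \sum_(i < N) ((t ^+ i / (i`!)%:R)%:C *: bmx_pow A1 A2 i x)).

Definition bmx_lift (n : nat) (A1 A2 : 'M[C]_n) : 'M[C]_(n + n) :=
  block_mx A1 (mxconj A2) A2 (mxconj A1).

Definition IO (n : nat) : 'M[C]_(n + n, n) := col_mx 1%:M 0.

End Bimatrix.

(* Main.v *)
Require Import Defs.
From mathcomp Require Import all_boot all_order all_algebra.
From mathcomp Require Import all_classical all_reals.
From mathcomp Require Import complex.
From mathcomp Require Import topology tvs normedtype landau sequences.
Import numFieldNormedType.Exports.
Import Order.TTheory GRing.Theory Num.Theory.
Local Open Scope ring_scope.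

Section Main.
Local Open Scope complex_scope.
Variable R : realType.
Local Notation C := R[i].
Section Alg.
Variable n : nat.
Implicit Types (P Q : 'M[C]_n) (x y : 'cV[C]_n).

Definition vv x : 'cV[C]_(n + n) := col_mx x (mxconj x).

Lemma mxconjK p q (M : 'M[C]_(p, q)) : mxconj (mxconj M) = M.
Proof. by apply/matrixP => i j; rewrite !mxE conjcK. Qed.

Lemma mxconjD p q (M N : 'M[C]_(p, q)) : mxconj (M + N) = mxconj M + mxconj N.
Proof. by apply/matrixP => i j; rewrite !mxE rmorphD. Qed.

Lemma mxconjM p q r (M : 'M[C]_(p, q)) (N : 'M[C]_(q, r)) :
  mxconj (M *m N) = mxconj M *m mxconj N.
Proof. exact: map_mxM. Qed.

Lemma mxconjZ p q (c : R) (M : 'M[C]_(p, q)) : mxconj (c%:C *: M) = c%:C *: mxconj M.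
Proof. apply/matrixP => i j; rewrite !mxE rmorphM; congr (_ * _).
by apply/eqP; rewrite eq_complex /= oppr0 !eqxx.
Qed.

Lemma mxconj0 p q : mxconj (0 : 'M[C]_(p, q)) = 0.
Proof. by apply/matrixP => i j; rewrite !mxE conjc0. Qed.

Lemma mxconj1 : mxconj (1%:M : 'M[C]_n) = 1%:M.
Proof. by apply/matrixP => i j; rewrite !mxE rmorph_nat. Qed.

Lemma lift_vv (A1 A2 : 'M[C]_n) x : bmx_lift A1 A2 *m vv x = vv (bmx A1 A2 x).
Proof.
rewrite /bmx_lift /vv mul_block_col /bmx mxconjD !mxconjM !mxconjK.
by rewrite [mxconj A1 *m _ + _]addrC.
Qed.

Lemma lift_IO P Q : bmx_lift P Q *m IO R n = col_mx P Q.
Proof. by rewrite /bmx_lift /IO mul_block_col !mulmx1 !mulmx0 !addr0. Qed.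

Lemma lift_mul P Q P' Q' : bmx_lift P Q *m bmx_lift P' Q' =
  bmx_lift (P *m P' + mxconj Q *m Q') (Q *m P' + mxconj P *m Q').
Proof.
rewrite /bmx_lift mulmx_block mxconjD !mxconjM !mxconjK mxconjD !mxconjM !mxconjK.
by rewrite [mxconj Q *m _ + _]addrC [mxconj P *m _ + _]addrC.
Qed.

Lemma lift_add P Q P' Q' : bmx_lift P Q + bmx_lift P' Q' = bmx_lift (P + P') (Q + Q').
Proof. by rewrite /bmx_lift add_block_mx !mxconjD. Qed.

Lemma lift_scale (c : R) P Q : c%:C *: bmx_lift P Q = bmx_lift (c%:C *: P) (c%:C *: Q).
Proof. by rewrite /bmx_lift scale_block_mx !mxconjZ. Qed.

Lemma lift0 : bmx_lift 0 0 = 0 :> 'M[C]_(n + n).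
Proof. by rewrite /bmx_lift mxconj0 block_mx0. Qed.

Lemma lift1 : bmx_lift 1%:M 0 = 1%:M :> 'M[C]_(n + n).
Proof. by rewrite /bmx_lift mxconj0 mxconj1 scalar_mx_block. Qed.

Lemma vvD x y : vv (x + y) = vv x + vv y.
Proof. by rewrite /vv mxconjD add_col_mx. Qed.

Lemma vvZ (c : R) x : vv (c%:C *: x) = c%:C *: vv x.
Proof. by rewrite /vv mxconjZ scale_col_mx. Qed.

Lemma vv0 : vv 0 = 0.
Proof. by rewrite /vv mxconj0 col_mx0. Qed.

Lemma keyG (M : 'M[C]_(n + n)) P Q x y : M = bmx_lift P Q -> M *m vv x = vv y ->
  bmx (usubmx (M *m IO R n)) (dsubmx (M *m IO R n)) x = y.
Proof.
move=> -> H; rewrite lift_IO col_mxKu col_mxKd.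
by move: H; rewrite lift_vv => /(congr1 usubmx); rewrite /vv !col_mxKu.
Qed.


Lemma pow_lift (A1 A2 : 'M[C]_n) k : exists P Q, bmx_lift A1 A2 ^+ k = bmx_lift P Q.
Proof.
elim: k => [|k [P [Q IH]]]; first by exists 1%:M, 0; rewrite expr0 lift1.
by rewrite exprS IH -mulmxE lift_mul; eexists; eexists.
Qed.

Lemma pow_vv (A1 A2 : 'M[C]_n) k x :
  bmx_lift A1 A2 ^+ k *m vv x = vv (bmx_pow A1 A2 k x).
Proof.
elim: k => [|k IH]; first by rewrite expr0 mul1mx.
by rewrite exprS -mulmxE -mulmxA IH lift_vv /bmx_pow iterS.
Qed.

Lemma part2 (A1 A2 : 'M[C]_n) k x :
  let Phi := bmx_lift A1 A2 ^+ k *m IO R n in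
  bmx (usubmx Phi) (dsubmx Phi) x = bmx_pow A1 A2 k x.
Proof.
have [P [Q H]] := pow_lift A1 A2 k.
exact: (keyG _ _ _ _ _ H (pow_vv A1 A2 k x)).
Qed.

Lemma bmx_id P Q : (forall x, bmx P Q x = x) -> P = 1%:M /\ Q = 0.
Proof.
move=> H.
have key : forall j : 'I_n, P *m @delta_mx C n 1 j ord0 = delta_mx j ord0 /\ mxconj Q *m @delta_mx C n 1 j ord0 = 0.
  move=> j; set e : 'cV[C]_n := @delta_mx C n 1 j ord0.
  have ce : mxconj e = e.
    by apply/matrixP => a b; rewrite !mxE; case: (_ && _); rewrite ?conjc0 ?conjc1.
  have H1 := H e; rewrite /bmx ce in H1.
  have H2 := H ('i *: e); rewrite /bmx in H2.
  have ce2 : mxconj ('i *: e) = - ('i *: e).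
    apply/matrixP => a b; rewrite !mxE; case: (_ && _).
      by apply/eqP; simpc.
    by rewrite !mulr0 conjc0 oppr0.
  rewrite ce2 mulmxN -!scalemxAr -scalerBr in H2.
  have {H2} H2 := scalerI _ H2.
  have hi : 'i != 0 :> C by apply/eqP => /eqP; rewrite eq_complex /= oner_eq0 andbF.
  have {H2} H2 := H2 hi.
  set a := P *m e in H1 H2 *; set b := mxconj Q *m e in H1 H2 *.
  have hb : b + b = 0.
    have -> : b + b = (a + b) - (a - b). 
      by rewrite opprB addrA addrAC [a + b - a]addrAC subrr add0r.
    by rewrite H1 H2 subrr.
  have b0 : b = 0.
    apply/matrixP => r s; move/matrixP: hb => /(_ r s); rewrite !mxE.
    by move/eqP; rewrite -mulr2n mulrn_eq0 /= => /eqP.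
  by split => //; move: H1; rewrite b0 addr0.
split.
  apply/matrixP => r s; have [h _] := key s; move/matrixP: h => /(_ r 0).
  by rewrite -[delta_mx s ord0]/(delta_mx s 0) -colE !mxE eqxx andbT.
rewrite -[Q]mxconjK; apply/matrixP => r s; have [_ h] := key s; move/matrixP: h => /(_ r 0).
by rewrite -[delta_mx s ord0]/(delta_mx s 0) -colE !mxE => ->; rewrite conjc0.
Qed.

Lemma inv_lift (A1 A2 B1 B2 : 'M[C]_n) : bmx_inverse A1 A2 B1 B2 ->
  invmx (bmx_lift A1 A2) = bmx_lift B1 B2.
Proof.
move=> [_ HBA].
have [P [Q HPQ]] : exists P Q, bmx_lift B1 B2 *m bmx_lift A1 A2 = bmx_lift P Q.
  by rewrite lift_mul; eexists; eexists.
have hx : forall x, bmx P Q x = x.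
  move=> x; have := lift_vv P Q x; rewrite -HPQ -mulmxA !lift_vv HBA.
  by move/(congr1 usubmx); rewrite /vv !col_mxKu.
have [eP eQ] := bmx_id _ _ hx.
rewrite eP eQ lift1 in HPQ.
have [_ uA] := mulmx1_unit HPQ.
by rewrite -[LHS]mul1mx -HPQ mulmxK.
Qed.

End Alg.
Section An.
Local Notation Re := complex.Re.
Local Notation Im := complex.Im.

Lemma nc_real (z : C) : `|z| = (Re `|z|)%:C.
Proof. by rewrite normc_def. Qed.

Lemma nc_ge0 (z : C) : 0 <= Re `|z|.
Proof. by rewrite normc_def /= sqrtr_ge0. Qed.

Lemma normC_real (r : R) : `|r%:C| = `|r|%:C.
Proof. by rewrite normc_def /= expr0n /= addr0 sqrtr_sqr. Qed.

Lemma norm_conj (z : C) : `|z^*| = `|z|.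
Proof. by case: z => a b; rewrite !normc_def /= sqrrN. Qed.

Lemma Re_le (z : C) : `|Re z| <= Re `|z|.
Proof.
rewrite normc_def /= -sqrtr_sqr ler_sqrt ?lerDl ?sqr_ge0 //.
by rewrite addr_ge0 ?sqr_ge0.
Qed.

Lemma Im_le (z : C) : `|Im z| <= Re `|z|.
Proof.
rewrite normc_def /= -sqrtr_sqr ler_sqrt ?lerDr ?sqr_ge0 //.
by rewrite addr_ge0 ?sqr_ge0.
Qed.

Lemma norm_cplx (x y : R) : `|x +i* y| <= (`|x| + `|y|)%:C.
Proof.
have -> : x +i* y = x%:C + y%:C * 'i.
  by apply/eqP; rewrite eq_complex /= !mulr0 !mulr1 !subr0 !addr0 add0r !eqxx.
rewrite rmorphD /= -!normC_real; apply: le_trans (ler_normD _ _) _.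
rewrite normrM.
have -> : `|'i : C| = 1 by rewrite normc_def /= expr0n /= add0r expr1n sqrtr1.
by rewrite mulr1.
Qed.

Lemma small0 (z : C) : (forall e : R, 0 < e -> `|z| < e%:C) -> z = 0.
Proof.
move=> H; apply/eqP; apply/negPn/negP => nz.
have hp : 0 < Re `|z| by rewrite -ltcR -nc_real normr_gt0.
by have := H _ hp; rewrite -nc_real ltxx.
Qed.

Lemma cmx_cvg_uniq p q (u : nat -> 'M[C]_(p, q)) L L' :
  cmx_cvg u L -> cmx_cvg u L' -> L = L'.
Proof.
move=> H1 H2; apply/matrixP => i j; apply/eqP; rewrite -subr_eq0; apply/eqP.
apply: small0 => e e0.
have e20 : 0 < e / 2 by rewrite divr_gt0.
have [N1 HN1] := H1 _ e20; have [N2 HN2] := H2 _ e20.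
have := HN1 (maxn N1 N2) (leq_maxl _ _) i j.
have := HN2 (maxn N1 N2) (leq_maxr _ _) i j.
set w := u _ i j => h2 h1.
have -> : L i j - L' i j = (w - L' i j) - (w - L i j).
  by rewrite opprB [RHS]addrC addrA subrK.
apply: le_lt_trans (ler_normB _ _) _.
rewrite [e](splitr e) rmorphD /=.
exact: ltrD.
Qed.


Lemma real_series (r b : nat -> R) : (forall i, `|r i| <= b i) -> cvgn (series b) ->
  exists l, forall e, 0 < e -> exists N, forall k, (N <= k)%N ->
    `|\sum_(i < k) r i - l| < e.
Proof.
move=> rb cb.
have cr : cvgn (series r).
  apply: normed_cvg.
  apply: (series_le_cvg _ _ rb cb) => i //; exact: le_trans (rb i).
exists (limn (series r)) => e e0.
have := cvgr_dist_lt _ _ cr _ e0.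
move=> [N _ HN]; exists N => k Nk.
rewrite distrC -(big_mkord xpredT) ; exact: HN.
Qed.


Lemma sum_cplx (a : nat -> C) k :
  \sum_(i < k) a i = (\sum_(i < k) Re (a i)) +i* (\sum_(i < k) Im (a i)).
Proof.
elim: k => [|k IH]; first by rewrite !big_ord0.
by rewrite !big_ord_recr /= IH; case: (a k).
Qed.

Lemma cplx_series (a : nat -> C) (b : nat -> R) :
  (forall i, `|a i| <= (b i)%:C) -> cvgn (series b) ->
  exists L, forall e, 0 < e -> exists N, forall k, (N <= k)%N ->
    `|\sum_(i < k) a i - L| < e%:C.
Proof.
move=> ab cb.
have hb i : Re `|a i| <= b i by rewrite -lecR -nc_real.
have [lr Hr] := real_series (fun i => Re (a i)) b (fun i => le_trans (Re_le _) (hb i)) cb.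
have [li Hi] := real_series (fun i => Im (a i)) b (fun i => le_trans (Im_le _) (hb i)) cb.
exists (lr +i* li) => e e0.
have e20 : 0 < e / 2 by rewrite divr_gt0.
have [N1 H1] := Hr _ e20; have [N2 H2] := Hi _ e20.
exists (maxn N1 N2) => k Nk.
have h1 := H1 k (leq_trans (leq_maxl _ _) Nk).
have h2 := H2 k (leq_trans (leq_maxr _ _) Nk).
rewrite sum_cplx.
apply: le_lt_trans (norm_cplx _ _) _.
by rewrite ltcR [e](splitr e) ltrD.
Qed.


Lemma pow_bound m (M : 'M[C]_m) i (j k : 'I_m) :
  `|(M ^+ i) j k| <= (\sum_a \sum_b `|M a b|) ^+ i.
Proof.
set K := \sum_a \sum_b `|M a b|.
have K0 : 0 <= K by rewrite sumr_ge0 // => a _; rewrite sumr_ge0.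
elim: i j k => [|i IH] j k.
  by rewrite expr0 mxE; case: (j == k); rewrite ?normr1 ?normr0.
rewrite exprS -mulmxE mxE.
apply: le_trans (ler_norm_sum _ _ _) _.
apply: (@le_trans _ _ (\sum_b `|M j b| * K ^+ i)).
  apply: ler_sum => b _; rewrite normrM; apply: ler_wpM2l => //.
have Kj : \sum_b `|M j b| <= K.
  rewrite /K [X in _ <= X](bigD1 j) //= lerDl.
  by apply: sumr_ge0 => a _; apply: sumr_ge0.
rewrite -mulr_suml exprS; apply: (ler_pM _ _ Kj (lexx _)).
  by apply: sumr_ge0.
by rewrite exprn_ge0.
Qed.


Lemma ge0_real (z : C) : 0 <= z -> z = (Re z)%:C.
Proof.
by rewrite lecE => /andP[/eqP h _]; case: z h => a b /= ->.
Qed.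

Lemma sum_entry m k (F : 'I_k -> 'M[C]_m) a b :
  (\sum_(i < k) F i) a b = \sum_(i < k) F i a b.
Proof. exact: summxE. Qed.

Lemma mexp_series_cvg m (t : R) (M : 'M[C]_m) : exists Lm,
  cmx_cvg (fun N => \sum_(i < N) ((t ^+ i / (i`!)%:R)%:C *: M ^+ i)) Lm.
Proof.
set K := \sum_a \sum_b `|M a b|.
have K0 : 0 <= K by rewrite sumr_ge0 // => a _; rewrite sumr_ge0.
set Kr := Re K.
have KE : K = Kr%:C by apply: ge0_real.
have Kr0 : 0 <= Kr by rewrite -lecR -KE.
have H : forall p : 'I_m * 'I_m, exists L, forall e, 0 < e -> exists N, forall k, (N <= k)%N ->
    `|\sum_(i < k) ((t ^+ i / (i`!)%:R)%:C * (M ^+ i) p.1 p.2) - L| < e%:C.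
  move=> [j k]; apply: (cplx_series (fun i : nat => (t ^+ i / (i`!)%:R)%:C * (M ^+ i) j k) (exp_coeff (`|t| * Kr))); last first.
    exact: is_cvg_series_exp_coeff.
  move=> i /=; rewrite normrM normC_real.
  have c0 : 0 <= `|t ^+ i / (i`!)%:R|%:C by rewrite lecR.
  apply: (le_trans (ler_pM c0 (normr_ge0 _) (lexx _) (pow_bound _ M i j k))).
  rewrite -/K KE -rmorphXn -rmorphM lecR.
  rewrite /exp_coeff /= exprMn normrM normfV normrX [`|_%:R|]ger0_norm //.
  by rewrite mulrAC.
have [Lf HL] := choice H.
exists (\matrix_(j, k) Lf (j, k)) => e e0.
have H2 : forall p : 'I_m * 'I_m, exists N, forall k, (N <= k)%N ->
    `|\sum_(i < k) ((t ^+ i / (i`!)%:R)%:C * (M ^+ i) p.1 p.2) - Lf p| < e%:C.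
  by move=> p; apply: HL.
have [Nf HN] := choice H2.
exists (\max_p Nf p) => k Nk j l.
rewrite summxE mxE.
have := HN (j, l) k (leq_trans (leq_bigmax (j, l)) Nk).
move=> h; under eq_bigr do rewrite mxE; exact: h.
Qed.


Lemma cvg_ext p q (u v : nat -> 'M[C]_(p, q)) L :
  (forall N, u N = v N) -> cmx_cvg u L -> cmx_cvg v L.
Proof. by move=> h H e e0; have [N HN] := H e e0; exists N => k Nk; rewrite -h; apply: HN. Qed.

Lemma cvg_add p q (u v : nat -> 'M[C]_(p, q)) L L' :
  cmx_cvg u L -> cmx_cvg v L' -> cmx_cvg (fun N => u N + v N) (L + L').
Proof.
move=> H1 H2 e e0.
have e20 : 0 < e / 2 by rewrite divr_gt0.
have [N1 HN1] := H1 _ e20; have [N2 HN2] := H2 _ e20.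
exists (maxn N1 N2) => k Nk i j.
have h1 := HN1 k (leq_trans (leq_maxl _ _) Nk) i j.
have h2 := HN2 k (leq_trans (leq_maxr _ _) Nk) i j.
rewrite !mxE.
have -> : u k i j + v k i j - (L i j + L' i j) = (u k i j - L i j) + (v k i j - L' i j).
  by rewrite opprD addrACA.
apply: le_lt_trans (ler_normD _ _) _.
by rewrite [e](splitr e) rmorphD /= ltrD.
Qed.

Lemma cvg_conj p q (u : nat -> 'M[C]_(p, q)) L :
  cmx_cvg u L -> cmx_cvg (fun N => mxconj (u N)) (mxconj L).
Proof.
move=> H e e0; have [N HN] := H e e0; exists N => k Nk i j.
by rewrite !mxE -rmorphB norm_conj; apply: HN.
Qed.

Lemma cvg_usub p q r (u : nat -> 'M[C]_(p + q, r)) L :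
  cmx_cvg u L -> cmx_cvg (fun N => usubmx (u N)) (usubmx L).
Proof.
move=> H e e0; have [N HN] := H e e0; exists N => k Nk i j.
by rewrite !mxE; apply: HN.
Qed.

Lemma cvg_dsub p q r (u : nat -> 'M[C]_(p + q, r)) L :
  cmx_cvg u L -> cmx_cvg (fun N => dsubmx (u N)) (dsubmx L).
Proof.
move=> H e e0; have [N HN] := H e e0; exists N => k Nk i j.
by rewrite !mxE; apply: HN.
Qed.

Lemma cvg_mulr p q r (u : nat -> 'M[C]_(p, q)) L (B : 'M[C]_(q, r)) :
  cmx_cvg u L -> cmx_cvg (fun N => u N *m B) (L *m B).
Proof.
move=> H e e0.
set K := \sum_a \sum_b `|B a b|.
have K0 : 0 <= K by rewrite sumr_ge0 // => a _; rewrite sumr_ge0.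
set Kr := Re K.
have KE : K = Kr%:C by apply: ge0_real.
have Kr0 : 0 <= Kr by rewrite -lecR -KE.
have Kr1 : 0 < Kr + 1 by rewrite ltr_wpDl.
set e' := e / (Kr + 1).
have e'0 : 0 < e' by rewrite divr_gt0.
have [N HN] := H e' e'0; exists N => k Nk i j.
rewrite !mxE -sumrB.
apply: le_lt_trans (ler_norm_sum _ _ _) _.
apply: (@le_lt_trans _ _ (\sum_l e'%:C * `|B l j|)).
  apply: ler_sum => l _; rewrite -mulrBl normrM.
  apply: ler_wpM2r; first exact: normr_ge0.
  exact: ltW (HN k Nk i l).
rewrite -mulr_sumr.
apply: (@le_lt_trans _ _ (e'%:C * K)).
  apply: ler_wpM2l; first by rewrite lecR ltW.
  rewrite /K; apply: ler_sum => l _; rewrite [X in _ <= X](bigD1 j) //= lerDl.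
  by apply: sumr_ge0 => b _; exact: normr_ge0.
rewrite KE -rmorphM ltcR.
have -> : e = e' * (Kr + 1) by rewrite /e' divfK // gt_eqF.
by rewrite ltr_pM2l // ltrDl.
Qed.

End An.

Lemma part1 n (A1 A2 : 'M[C]_n) t x :
  let Phi := mexp t (bmx_lift A1 A2) *m IO R n in
  bmx (usubmx Phi) (dsubmx Phi) x = bmx_exp t A1 A2 x.
Proof.
move=> Phi; rewrite /Phi.
set L := bmx_lift A1 A2.
set S := fun N => \sum_(i < N) ((t ^+ i / (i`!)%:R)%:C *: L ^+ i).
set s := fun N => \sum_(i < N) ((t ^+ i / (i`!)%:R)%:C *: bmx_pow A1 A2 i x).
have Hs : forall N, (exists P Q, S N = bmx_lift P Q) /\ S N *m vv _ x = vv _ (s N).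
  elim => [|N [[P [Q HPQ]] Hv]].
    rewrite /S /s !big_ord0; split; first by exists 0, 0; rewrite lift0.
    by rewrite mul0mx vv0.
  have eS : S N.+1 = S N + (t ^+ N / (N`!)%:R)%:C *: L ^+ N by rewrite /S big_ord_recr.
  have es : s N.+1 = s N + (t ^+ N / (N`!)%:R)%:C *: bmx_pow A1 A2 N x by rewrite /s big_ord_recr.
  rewrite eS es; split.
    have [P' [Q' HL]] := pow_lift _ A1 A2 N.
    by rewrite HPQ HL lift_scale lift_add; eexists; eexists.
  by rewrite mulmxDl -scalemxAl pow_vv Hv vvD vvZ.
set f := fun M : 'M[C]_(n + n) => bmx (usubmx (M *m IO R n)) (dsubmx (M *m IO R n)) x.
have f_eq : forall N, f (S N) = s N.
  move=> N; have [[P [Q HPQ]] Hv] := Hs N.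
  by rewrite /f; exact: (keyG _ _ _ _ _ _ HPQ Hv).
have [Lm HLm] := mexp_series_cvg _ t L.
have Hm : cmx_cvg S (mexp t L) by apply: xgetPex; exists Lm.
have Hf : cmx_cvg (fun N => f (S N)) (f (mexp t L)).
  rewrite /f /bmx; apply: cvg_add.
    by apply: cvg_mulr; apply: cvg_usub; apply: cvg_mulr.
  by apply: cvg_mulr; apply: cvg_conj; apply: cvg_dsub; apply: cvg_mulr.
have Hs' : cmx_cvg s (f (mexp t L)) := cvg_ext _ _ _ _ _ f_eq Hf.
have He : cmx_cvg s (bmx_exp t A1 A2 x) by apply: xgetPex; exists (f (mexp t L)).
exact: (cmx_cvg_uniq _ _ _ _ _ Hs' He).
Qed.

End Main.

Theorem lemma8 (R : realType) (n : nat) (A1 A2 : 'M[R[i]]_n) :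
  (* t real: [Phi1; Phi2] = e^{t {A1,A2}_diamond} [I; 0]  ==>  {Phi1,Phi2} = e^{t{A1,A2}} *)
  (forall t : R,
     let Phi := mexp t (bmx_lift A1 A2) *m (@IO R n) in
     forall x, bmx (usubmx Phi) (dsubmx Phi) x = bmx_exp t A1 A2 x) /\
  (* t = k in Z, k >= 0 *)
  (forall k : nat,
     let Phi := bmx_lift A1 A2 ^+ k *m (@IO R n) in
     forall x, bmx (usubmx Phi) (dsubmx Phi) x = bmx_pow A1 A2 k x) /\
  (* t = -(k+1) in Z, {A1,A2} nonsingular with inverse {B1,B2} *)
  (forall B1 B2 : 'M[R[i]]_n, bmx_inverse A1 A2 B1 B2 ->
   forall k : nat,
     let Phi := invmx (bmx_lift A1 A2) ^+ k.+1 *m (@IO R n) in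
     forall x, bmx (usubmx Phi) (dsubmx Phi) x = bmx_pow B1 B2 k.+1 x).
Proof.
split; first by move=> t /= x; exact: part1.
split; first by move=> k /= x; exact: part2.
move=> B1 B2 HB k /= x; rewrite (inv_lift _ _ _ _ _ _ HB).
exact: part2.
Qed.
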